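(* Let $m$ be a positive integer, let $x,\bar x$ be positive integers and $r,\bar r\in\{0,\dots,m-1\}$. Suppose that for some positive integer $j$ we have $r_n(x,r)=r_n(\bar x,\bar r)$ for all $n\ge j$. Then $r_n(x,r)=r_n(\bar x,\bar r)$ for all $n\ge 0$.
   Context: Fix a positive integer $m$. The triangle $T_m$ is an array whose row $x$ ($x=1,2,\dots$) has $x$ entries, in columns $0,\dots,x-1$. Row $1$ is the single entry $1$. For $x>1$, row $x$ is obtained from row $x-1$ by rotating it cyclically left by $m$ positions (the entry in column $c$ of row $x-1$ moves to column $(c-m)\bmod(x-1)\in\{0,\dots,x-2\}$ of row $x$), then appending in column $x-1$ a new entry equal to $1$ plus the entry in column $0$ of row $x-1$. Entries are individual objects keeping their identity as they move. Tracking: for a positive integer $x$ and $r\in\{0,\dots,m-1\}$, follow the individual entry in row $x$, column $r\bmod x$. Let $(x_0,r_0),(x_1,r_1),\dots$ be the list, in strictly increasing lexicographic order, of all integer pairs $(y,c)$ with $y\ge x$, $0\le c\le m-1$, $(y,c)\ge (x,r)$ lexicographically, such that the tracked entry occupies column $c\bmod y$ of row $y$ (so $x_0=x$, $r_0=r$). Write $x_n(x,r)=x_n$, $r_n(x,r)=r_n$. *)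

(* Defs.v *)
From mathcomp Require Import all_boot.
Set Implicit Arguments. Unset Strict Implicit. Unset Printing Implicit Defensive.

(* Column, in row x + k of the triangle T_m, of the entry that sits in
   row x, column r mod x.  Passing from row y to row y+1 the entry in
   column c moves to column (c - m) mod y, computed here as
   (c + y - m mod y) mod y  (y >= 1, c < y). *)
Fixpoint trackpos (m x r k : nat) : nat :=
  match k with
  | 0 => r %% x
  | k'.+1 => let y := x + k' in (trackpos m x r k' + y - m %% y) %% y
  end.

(* (y,c) belongs to the tracking list of (x,r):
   y >= x, 0 <= c <= m-1, (y,c) >= (x,r) lexicographically, and the
   tracked entry occupies column c mod y of row y. *)
Definition track_hit (m x r y c : nat) : bool :=
  [&& x <= y, c < m, (x < y) || (r <= c) & c %% y == trackpos m x r (y - x)].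

Definition hits_before (m x r y c : nat) : nat :=
  \sum_(x <= y' < y.+1) \sum_(c' < m)
     (track_hit m x r y' c' && ((y' < y) || (c' < c))).

(* (y,c) = (x_n(x,r), r_n(x,r)), i.e. it is the element of index n
   (starting at 0) of the lexicographically increasing tracking list. *)
Definition nth_track (m x r n y c : nat) : Prop :=
  track_hit m x r y c /\ hits_before m x r y c = n.

Definition rn_agree (m x r xb rb n : nat) : Prop :=
  forall y c yb cb, nth_track m x r n y c -> nth_track m xb rb n yb cb -> c = cb.

(* Main.v *)
Require Import Defs.
From mathcomp Require Import all_boot zify.

Lemma mod_step (Y m v : nat) : 0 < Y -> m <= v -> v < Y + m ->
  ((v %% Y) + Y - m %% Y) %% Y = v - m.
Proof.
move=> Y0 mv vY.
have [a E] : exists a, v = a + m by exists (v - m); lia.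
subst v.
rewrite addnK -modnDmr.
have aY : a < Y by lia.
have bY : m %% Y < Y := ltn_pmod m Y0.
move: bY; move: (m %% Y) => b bY.
case: (ltnP (a + b) Y) => h.
- rewrite (modn_small h). have -> : a + b + Y - b = a + Y by lia.
  by rewrite modnDr modn_small.
- have e: (a+b) = (a+b-Y) + Y by lia.
  rewrite e modnDr (modn_small (_ : a + b - Y < Y)); last by lia.
  have -> : a + b - Y + Y - b = a by lia. by rewrite modn_small.
Qed.

Definition inv m x r Y v :=
  [/\ x <= Y, trackpos m x r (Y - x) = v %% Y & v < Y + m].

Lemma trackpos_S m x r Y : x <= Y ->
  trackpos m x r (Y.+1 - x) = (trackpos m x r (Y - x) + Y - m %% Y) %% Y.
Proof. move=> h. rewrite subSn //=. by rewrite subnKC. Qed.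

Lemma inv_step m x r Y v : 0 < x -> inv m x r Y v -> m <= v -> inv m x r Y.+1 (v - m).
Proof.
move=> x0 [xY tp vY] mv. split; first lia; last lia.
rewrite trackpos_S // tp mod_step //; try lia.
rewrite modn_small //; lia.
Qed.

Lemma inv_iter m x r k : 0 < x -> forall Y v, inv m x r Y v -> k * m <= v ->
  inv m x r (Y + k) (v - k * m).
Proof.
move=> x0; elim: k => [|k IH] Y v I h; first by rewrite addn0 mul0n subn0.
have I' := IH Y v I (leq_trans (leq_mul (leqnSn k) (leqnn m)) h).
have := @inv_step m x r (Y + k) (v - k * m) x0 I' (_ : m <= v - k * m).
rewrite addnS. have -> : v - k * m - m = v - k.+1 * m by rewrite mulSn; lia.
apply. rewrite mulSn in h; lia.
Qed.

Lemma cong_gap a b y : a %% y = b %% y -> a < b -> a + y <= b.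
Proof.
move=> e ab.
have : y %| b - a by rewrite -eqn_mod_dvd ?(ltnW ab) // e.
move/(dvdn_leq (_ : 0 < b - a)). move=> H. have := H ltac:(lia). lia.
Qed.

Lemma hit_facts m x r y c : track_hit m x r y c ->
  [/\ x <= y, c < m, (x < y) || (r <= c) & trackpos m x r (y - x) = c %% y].
Proof. by case/and4P=> a b d /eqP e; split. Qed.

Lemma hit_inv m x r y c : track_hit m x r y c -> inv m x r y (c + y).
Proof. case/hit_facts=> a b _ e; split=> //; last lia. by rewrite modnDr. Qed.

Definition nxt m (p : nat * nat) := (p.1 + (p.2 + p.1) %/ m, (p.2 + p.1) %% m).
Definition rk m (p : nat * nat) := p.1 * m + p.2.

Lemma rk_nxt m p : rk m (nxt m p) = rk m p + p.1.
Proof. rewrite /rk /nxt /= mulnDl -addnA -divn_eq. lia. Qed.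

Lemma nxt_hit m x r y c : 0 < x -> 0 < m -> track_hit m x r y c ->
  track_hit m x r (nxt m (y, c)).1 (nxt m (y, c)).2.
Proof.
move=> x0 m0 H; have [xy cm xr tp] := @hit_facts m x r y c H; rewrite /nxt /=.
case: (ltnP (c + y) m) => hm.
- rewrite divn_small // modn_small // addn0.
  apply/and4P; split=> //.
  by apply/orP; case/orP: xr=> h; [left|right]; lia.
  by rewrite modnDr tp.
- set K := (c + y) %/ m.
  have K1 : 0 < K by rewrite divn_gt0.
  have I := @inv_iter m x r K x0 y (c + y) (@hit_inv m x r y c H) (leq_divM _ _).
  have vE : c + y - K * m = (c + y) %% m by rewrite {1}(divn_eq (c + y) m) addnC addnK.
  rewrite vE in I. case: I => a tp2 _.
  apply/and4P; split=> //; first by rewrite ltn_pmod.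
  by apply/orP; left; lia.
  by rewrite tp2.
Qed.

Lemma rk_inj m y c y' c' : c < m -> c' < m -> y * m + c = y' * m + c' -> y = y' /\ c = c'.
Proof.
move=> cm cm' e.
have m0 : 0 < m by lia.
have e1 := congr1 (fun z => z %/ m) e. have e2 := congr1 (fun z => z %% m) e.
rewrite /= !divnMDl // !divn_small // !addn0 in e1.
rewrite /= !modnMDl !modn_small // in e2.
Qed.

Ltac lc := repeat match goal with
  | H : context [_ %% _] |- _ => clear H
  | H : context [_ %/ _] |- _ => clear H
  | H : context [trackpos _ _ _ _] |- _ => clear H
  | H : context [track_hit _ _ _ _ _] |- _ => clear H
  end; lia.

Lemma rk_le a b a' b' m : a * m + b < a' * m + b' -> b' < m -> a <= a'.
Proof.
move=> h hb; rewrite leqNgt; apply/negP=> lt.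
have : a'.+1 * m <= a * m by rewrite leq_mul2r lt orbT.
rewrite mulSn; lia.
Qed.

Lemma nobetween m x r y c y' c' : 0 < x -> 0 < m ->
  track_hit m x r y c -> track_hit m x r y' c' ->
  rk m (y, c) < rk m (y', c') -> rk m (y', c') < rk m (nxt m (y, c)) -> False.
Proof.
move=> x0 m0 H H'.
have [xy cm xr tp] := @hit_facts m x r y c H.
have [xy' cm' xr' tp'] := @hit_facts m x r y' c' H'.
rewrite rk_nxt /rk /= => h1 h2.
have yy' : y <= y' := @rk_le y c y' c' m h1 cm'.
case: (ltnP (c + y) m) => hm.
- have y'y : y' <= y by apply: (@rk_le y' c' y (c + y) m); lia.
  have ey : y' = y by lia. subst y'.
  have e : c %% y = c' %% y by rewrite -tp -tp'.
  have := @cong_gap c c' y e (_ : c < c'). lia.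
- have dE := divn_eq (c + y) m.
  have vm := ltn_pmod (c + y) m0.
  have K1 : 0 < (c + y) %/ m by rewrite divn_gt0.
  have Iall := fun k => @inv_iter m x r k x0 y (c + y) (@hit_inv m x r y c H).
  move: ((c + y) %/ m) ((c + y) %% m) dE vm K1 => K v dE vm K1.
  have mK : m <= K * m by rewrite leq_pmull.
  have y'K : y' <= y + K by apply: (@rk_le y' c' (y + K) v m); rewrite // mulnDl; lc.
  case: (ltngtP y' y) => [|hy|hy]; first lc.
  + case: (ltngtP y' (y + K)) => [hK|hK|hK]; last first.
    * subst y'.
      have I := Iall K (_ : K * m <= c + y). case: I => [|_ tp2 _]; first lc.
      have vE : c + y - K * m = v by lc.
      rewrite vE in tp2.
      have vy : v < y by lc.
      have cv : c' < v by rewrite mulnDl in h2; lc.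
      rewrite tp2 !modn_small in tp'; lc.
    * lc.
    * have [k yk] : exists k, y' = y + k by exists (y' - y); lc.
      have kK : k.+1 * m <= K * m by rewrite leq_mul2r; apply/orP; right; lc.
      have k1 : m <= k * m by rewrite leq_pmull //; lc.
      rewrite mulSn in kK.
      have I := Iall k (_ : k * m <= c + y).
      case: I => [|_ tp2 _]; first lc.
      rewrite -yk in tp2.
      have wy : c + y - k * m < y' by lc.
      rewrite tp2 (modn_small wy) in tp'.
      have := leq_mod c' y'; rewrite -tp' => ?; lc.
  + subst y'.
    have e : c %% y = c' %% y by rewrite -tp -tp'.
    have := @cong_gap c c' y e (_ : c < c'). lc.
Qed.

Definition S m x r n := iter n (nxt m) (x, r).
Definition HB m x r N (p : nat * nat) :=
  \sum_(x <= y' < N) \sum_(c' < m) (track_hit m x r y' c' && (rk m (y', nat_of_ord c') < rk m p)).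

Lemma hb_HB m x r y c N : x <= y -> c < m -> y < N ->
  hits_before m x r y c = HB m x r N (y, c).
Proof.
move=> xy cm yN; rewrite /hits_before /HB [in RHS](@big_cat_nat _ _ _ y.+1) //=; last lia.
rewrite [X in _ = addn _ X]big1_seq ?addn0; last first.
  move=> y' /andP[_]; rewrite mem_index_iota => /andP[hy _].
  apply: big1 => c' _. rewrite /rk /=.
  case: (track_hit _ _ _ _ _); rewrite //=.
  have : y.+1 * m <= y' * m by rewrite leq_mul2r hy orbT.
  rewrite mulSn ltnNge => h; apply/eqP; rewrite eqb0 negbK; lia.
apply: eq_big_nat => y' /andP[_ hy']; apply: eq_bigr => c' _.
case h: (track_hit _ _ _ _ _) => //=.
have [_ cm' _ _] := @hit_facts m x r y' c' h.
rewrite /rk /=. congr nat_of_bool.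
case: (ltngtP y' y) => [lt|gt|eq] /=.
- symmetry; apply/idP.
  have : y'.+1 * m <= y * m by rewrite leq_mul2r lt orbT.
  rewrite mulSn; lia.
- lia.
- subst y'. by rewrite ltn_add2l.
Qed.

Lemma sum_ind a b m y1 c1 : a <= y1 < b -> c1 < m ->
  \sum_(a <= y' < b) \sum_(c' < m) ((y' == y1) && (nat_of_ord c' == c1) : nat) = 1.
Proof.
move=> /andP[ay yb] cm.
have inner : forall y', \sum_(c' < m) ((y' == y1) && (nat_of_ord c' == c1) : nat) = (y' == y1).
  move=> y'; case: (y' =P y1) => [_|_] /=; last by apply: big1.
  rewrite (bigD1 (Ordinal cm)) //= eqxx big1 // => i /eqP ne.
  case: (i =P c1 :> nat) => // e; exfalso; apply: ne; apply: val_inj; exact: e.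
rewrite (eq_bigr _ (fun y' _ => inner y')).
rewrite (@big_cat_nat _ _ _ y1) ?(ltnW yb) //= (@big_cat_nat _ _ _ y1.+1 y1) //= big_nat1 eqxx.
rewrite !big1_seq // => i /andP[_]; rewrite mem_index_iota => /andP[h1 h2];
  apply/eqP; rewrite eqb0; apply/eqP; lia.
Qed.

Lemma count_step m x r N y1 c1 p2 : 0 < m -> track_hit m x r y1 c1 ->
  rk m (y1, c1) < rk m p2 ->
  (forall y c, track_hit m x r y c -> rk m (y1, c1) < rk m (y, c) -> rk m (y, c) < rk m p2 -> False) ->
  y1 < N -> HB m x r N p2 = HB m x r N (y1, c1) + 1.
Proof.
move=> m0 H1 lt nb y1N. have [xy1 c1m _ _] := @hit_facts m x r y1 c1 H1.
rewrite /HB -(@sum_ind x N m y1 c1) ?xy1 // -big_split /=.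
apply: eq_big_nat => y' _. rewrite -big_split /=. apply: eq_bigr => c' _.
case E: ((y' == y1) && (nat_of_ord c' == c1)).
- case/andP: E => /eqP -> /eqP ->. by rewrite H1 lt /= ltnn.
- rewrite addn0. case h: track_hit => //=.
  have [_ cm' _ _] := @hit_facts m x r y' c' h. congr nat_of_bool.
  case: (ltngtP (rk m (y', nat_of_ord c')) (rk m (y1, c1))) => [a|a|a].
  + by rewrite (ltn_trans a lt).
  + apply/negbTE/negP => b. exact: (nb _ _ h a b).
  + exfalso. move: a; rewrite /rk /= => a.
    have [e1 e2] := @rk_inj m y' c' y1 c1 cm' c1m a.
    by rewrite e1 e2 !eqxx in E.
Qed.

Lemma S_hit m x r n : 0 < x -> 0 < m -> r < m -> track_hit m x r (S m x r n).1 (S m x r n).2.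
Proof.
move=> x0 m0 rm; elim: n => [|n IH].
  rewrite /S /=. apply/and4P; split=> //; first by rewrite leqnn orbT.
  by rewrite subnn.
rewrite /S iterS -/(S m x r n). move: IH; case: (S m x r n) => y c /= IH.
exact: (@nxt_hit m x r y c x0 m0 IH).
Qed.

Lemma S_rk m x r n : 0 < x -> 0 < m -> r < m -> rk m (S m x r n) < rk m (S m x r n.+1).
Proof.
move=> x0 m0 rm. have [xy _ _ _] := @hit_facts m x r _ _ (@S_hit m x r n x0 m0 rm).
rewrite /S iterS -/(S m x r n) rk_nxt. lia.
Qed.

Lemma S_y m x r n : (S m x r n).1 <= (S m x r n.+1).1.
Proof. rewrite /S iterS -/(S m x r n) /nxt /=. apply: leq_addr. Qed.

Lemma NT m x r n : 0 < x -> 0 < m -> r < m -> hits_before m x r (S m x r n).1 (S m x r n).2 = n.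
Proof.
move=> x0 m0 rm; elim: n => [|n IH].
  rewrite /S /hits_before /= big_nat1. apply: big1 => c _.
  apply/eqP; rewrite eqb0; apply/negP => /andP[/and4P[_ _ h _]].
  rewrite ltnn /= in h *; rewrite ltnNge h. by [].
have H1 := @S_hit m x r n x0 m0 rm. have H2 := @S_hit m x r n.+1 x0 m0 rm.
have [xy1 c1m _ _] := @hit_facts m x r _ _ H1. have [xy2 c2m _ _] := @hit_facts m x r _ _ H2.
have SE : S m x r n.+1 = nxt m ((S m x r n).1, (S m x r n).2).
  by rewrite -surjective_pairing /S iterS.
have lt1 : (S m x r n).1 < (S m x r n.+1).1.+1 by rewrite ltnS S_y.
rewrite (@hb_HB m x r _ _ ((S m x r n.+1).1.+1) xy1 c1m lt1) in IH.
rewrite (@hb_HB m x r _ _ ((S m x r n.+1).1.+1)) //.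
rewrite -surjective_pairing.
rewrite (@count_step m x r _ (S m x r n).1 (S m x r n).2) ?IH ?addn1 //.
- rewrite -surjective_pairing. exact: S_rk.
- move=> y c H l1 l2. apply: (@nobetween m x r _ _ y c x0 m0 H1 H l1). by rewrite -SE.
Qed.


Lemma S_eq m x r k y c : 0 < x -> 0 < m -> r < m -> c < m ->
  rk m (S m x r k) = rk m (y, c) -> S m x r k = (y, c).
Proof.
move=> x0 m0 rm cm.
have [_ ck _ _] := @hit_facts m x r _ _ (@S_hit m x r k x0 m0 rm).
move: ck; case: (S m x r k) => a b /= ck. rewrite /rk /= => e.
by case: (@rk_inj m a b y c ck cm e) => -> ->.
Qed.

Lemma hit_is_S m x r y c : 0 < x -> 0 < m -> r < m -> track_hit m x r y c ->
  exists k, S m x r k = (y, c).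
Proof.
move=> x0 m0 rm H. have [xy cm xr _] := @hit_facts m x r y c H.
suff: forall d k, rk m (S m x r k) <= rk m (y, c) ->
    rk m (y, c) - rk m (S m x r k) <= d -> exists k', S m x r k' = (y, c).
  move=> /(_ (rk m (y, c)) 0); apply; last lia.
  rewrite /S /rk /=. case/orP: xr => h.
  + have : x.+1 * m <= y * m by rewrite leq_mul2r h orbT.
    rewrite mulSn; lia.
  + have : x * m <= y * m by rewrite leq_mul2r xy orbT.
    lia.
elim=> [|d IH] k le dle.
  by exists k; apply: S_eq => //; lia.
case: (ltngtP (rk m (S m x r k)) (rk m (y, c))) => [lt|gt|eq]; last first.
- by exists k; apply: S_eq.
- lia.
have sr := @S_rk m x r k x0 m0 rm.
case: (leqP (rk m (S m x r k.+1)) (rk m (y, c))) => h.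
  apply: (IH k.+1) => //; lia.
exfalso.
have H1 := @S_hit m x r k x0 m0 rm.
apply: (@nobetween m x r _ _ y c x0 m0 H1 H).
  by rewrite -surjective_pairing.
by rewrite -surjective_pairing /S -iterS.
Qed.

Lemma UNQ m x r n y c : 0 < x -> 0 < m -> r < m -> nth_track m x r n y c ->
  S m x r n = (y, c).
Proof.
move=> x0 m0 rm [H hb].
have [k Sk] := @hit_is_S m x r y c x0 m0 rm H.
have := @NT m x r k x0 m0 rm. rewrite Sk /= hb => ->. exact: Sk.
Qed.

Lemma NTr m x r n : 0 < x -> 0 < m -> r < m -> nth_track m x r n (S m x r n).1 (S m x r n).2.
Proof. move=> x0 m0 rm; split; [exact: S_hit | exact: NT]. Qed.

Lemma S_rel m x r n : (S m x r n.+1).1 * m + (S m x r n.+1).2 = (S m x r n).1 * m.+1 + (S m x r n).2.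
Proof.
have SE : S m x r n.+1 = nxt m (S m x r n) by [].
rewrite mulnSr. have := rk_nxt m (S m x r n). rewrite -SE /rk. lia.
Qed.

Lemma S_c m x r n : 0 < m -> r < m -> (S m x r n).2 < m.
Proof. move=> m0 rm; case: n => [//|n]. rewrite (_ : S m x r n.+1 = nxt m (S m x r n)) //. exact: ltn_pmod. Qed.

Lemma cancel_lem A B P P' u v : coprime A B -> v < A -> u <= v ->
  P * A + v * B = P' * A + u * B -> u = v.
Proof.
move=> co vA uv e.
have uB : u * B <= v * B by rewrite leq_mul2r uv orbT.
have e2 : P' * A = P * A + (v - u) * B by rewrite mulnBl; lia.
have : A %| (v - u) * B.
  by rewrite -(dvdn_addr _ (dvdn_mull P (dvdnn A))) -e2 dvdn_mull.
rewrite Gauss_dvdl // => d.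
case: (posnP (v - u)) => h; first lia.
have := dvdn_leq h d. lia.
Qed.

Lemma alg m (Y Yb : nat -> nat) j : 1 < m ->
  (forall n, j <= n -> Y n.+1 * m + Yb n * m.+1 = Yb n.+1 * m + Y n * m.+1) -> Y j = Yb j.
Proof.
move=> m1 H.
have E : forall t, Y (j + t) * m ^ t + Yb j * m.+1 ^ t = Yb (j + t) * m ^ t + Y j * m.+1 ^ t.
  elim=> [|t IH]; first by rewrite addn0 !expn0 !muln1 addnC.
  have R := H (j + t) (leq_addr _ _). rewrite addnS !expnS.
  move: IH R; move: (m ^ t) (m.+1 ^ t) (Y (j + t)) (Yb (j + t)) (Y (j + t).+1) (Yb (j + t).+1) (Y j) (Yb j)
    => A B y yb y' yb' yj ybj IH R.
  have R' := congr1 (muln^~ A) R. have IH' := congr1 (muln^~ m.+1) IH.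
  simpl in R', IH'. rewrite !mulnDl in R' IH'. nia.
set t := Y j + Yb j.
have mt : t < m ^ t by apply: ltn_expl.
have co : coprime (m ^ t) (m.+1 ^ t) by rewrite coprimeXl // coprimeXr // coprimenS.
case: (leqP (Y j) (Yb j)) => h.
- have vA : Yb j < m ^ t by apply: leq_ltn_trans mt; rewrite /t leq_addl.
  exact: (@cancel_lem (m ^ t) (m.+1 ^ t) (Y (j + t)) (Yb (j + t)) (Y j) (Yb j) co vA h (E t)).
- symmetry.
  have vA : Y j < m ^ t by apply: leq_ltn_trans mt; rewrite /t leq_addr.
  exact: (@cancel_lem (m ^ t) (m.+1 ^ t) (Yb (j + t)) (Y (j + t)) (Yb j) (Y j) co vA (ltnW h) (esym (E t))).
Qed.

Theorem mainTheorem2 (m x r xb rb j : nat) :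
  0 < m -> 0 < x -> 0 < xb -> r < m -> rb < m -> 0 < j ->
  (forall n, j <= n -> rn_agree m x r xb rb n) ->
  forall n, rn_agree m x r xb rb n.
Proof.
move=> m0 x0 xb0 rm rbm j0 Hyp.
have Ceq : forall n, j <= n -> (S m x r n).2 = (S m xb rb n).2.
  move=> n hn. exact: (Hyp n hn _ _ _ _ (@NTr m x r n x0 m0 rm) (@NTr m xb rb n xb0 m0 rbm)).
suff all : forall n, (S m x r n).2 = (S m xb rb n).2.
  move=> n y c yb cb h1 h2.
  have e1 := @UNQ m x r n y c x0 m0 rm h1. have e2 := @UNQ m xb rb n yb cb xb0 m0 rbm h2.
  have := all n. by rewrite e1 e2.
case: (ltnP 1 m) => m1; last first.
  move=> n. have := @S_c m x r n m0 rm. have := @S_c m xb rb n m0 rbm. lia.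
have Yj : (S m x r j).1 = (S m xb rb j).1.
  apply: (@alg m (fun n => (S m x r n).1) (fun n => (S m xb rb n).1) j m1) => n hn; cbv beta.
  have := @S_rel m x r n. have := @S_rel m xb rb n.
  rewrite (Ceq n hn) (Ceq n.+1 (leqW hn)). rewrite !mulnSr. lia.
have Sj : S m x r j = S m xb rb j.
  by rewrite [LHS]surjective_pairing [RHS]surjective_pairing Yj (Ceq j (leqnn j)).
have back : forall k, k <= j -> S m x r (j - k) = S m xb rb (j - k).
  elim=> [|k IH] hk; first by rewrite subn0.
  have e : (j - k.+1).+1 = j - k by lia.
  have := IH (ltnW hk). rewrite -e => E.
  have r1 := @S_rel m x r (j - k.+1). have r2 := @S_rel m xb rb (j - k.+1).
  rewrite E in r1. rewrite r1 in r2.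
  have c1 := @S_c m x r (j - k.+1) m0 rm. have c2 := @S_c m xb rb (j - k.+1) m0 rbm.
  have [a b] := @rk_inj m.+1 _ _ _ _ (ltnW c1) (ltnW c2) r2.
  by rewrite [LHS]surjective_pairing [RHS]surjective_pairing a b.
move=> n. case: (leqP j n) => h; first exact: Ceq.
have := back (j - n) (leq_subr _ _). rewrite subKn ?(ltnW h) // => ->. by [].
Qed.
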